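(* Let $\mathcal{H}$ have dimension $D$ (finite or countably infinite), let $\hat H,\hat H'$ be self-adjoint with orthonormal eigenbases $\{|E_n\rangle\}$, $\{|E'_n\rangle\}$ and eigenvalues $\{E_n\},\{E'_n\}$ satisfying: (A) both spectra are non-degenerate; (B) if $E_k-E_l=E_m-E_n\ne0$ then $k=m$, $l=n$, and likewise for $\{E'_n\}$. Let $\hat\rho^0$ be a density operator, $\hat V$ unitary, $\hbar>0$, $\rho^0_{kl}=\langle E_k|\hat\rho^0|E_l\rangle$, $U_{mn}=\langle E'_m|\hat V|E_n\rangle$, $\rho'_{nn}(\tau)=\sum_{k,l}U_{nk}U_{nl}^*e^{-\mathrm{i}(E_k-E_l)\tau/\hbar}\rho^0_{kl}$, $\mu_n=\sum_k|U_{nk}|^2\rho^0_{kk}$, and $$\nu_{mn}=\sum_{k\neq l}U_{mk}U_{ml}^*U_{nk}^*U_{nl}|\rho^0_{kl}|^2 .$$ Then for all $m,n$, $$\overline{\rho'_{nn}(\tau)}=\mu_n,\qquad \overline{\rho'_{mm}(\tau)\rho'_{nn}(\tau)}=\mu_m\mu_n+\nu_{mn},$$ where $\overline{F(\tau)}=\lim_{T\to\infty}T^{-1}\int_0^TF(\tau)\,d\tau$. *)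

(* Defs.v *)
From Stdlib Require Import Reals Arith.
From Coquelicot Require Import Coquelicot.
Open Scope R_scope.

(* Index set of an orthonormal basis of a Hilbert space of dimension D:
   D = Some d : finite dimension d, indices 0..d-1;
   D = None   : countably infinite dimension, indices all of nat. *)
Definition inIb (D : option nat) (k : nat) : bool :=
  match D with Some d => Nat.ltb k d | None => true end.
Definition inI (D : option nat) (k : nat) : Prop := inIb D k = true.

Definition mask (D : option nat) (f : nat -> C) (k : nat) : C :=
  if inIb D k then f k else RtoC 0.

Definition has_csum (D : option nat) (f : nat -> C) (l : C) : Prop :=
  is_series (mask D f) l.

(* value of the sum over the index set (real and imaginary parts summed
   separately; agrees with l whenever has_csum D f l) *)
Definition csum (D : option nat) (f : nat -> C) : C :=
  (Series (fun k => Re (mask D f k)), Series (fun k => Im (mask D f k))).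

Definition delta (m n : nat) : C := if Nat.eqb m n then RtoC 1 else RtoC 0.

Definition cexpi (theta : R) : C := (cos theta, sin theta).

Definition unitary_mx (D : option nat) (U : nat -> nat -> C) : Prop :=
  (forall m n, inI D m -> inI D n ->
     has_csum D (fun k => (U m k * Cconj (U n k))%C) (delta m n)) /\
  (forall k l, inI D k -> inI D l ->
     has_csum D (fun m => (Cconj (U m k) * U m l)%C) (delta k l)).

Definition fsum (D : option nat) (N : nat) (f : nat -> C) : C :=
  sum_n (G := C_AbelianMonoid) (mask D f) N.

Definition density_mx (D : option nat) (rho : nat -> nat -> C) : Prop :=
  (forall k l, inI D k -> inI D l -> rho l k = Cconj (rho k l)) /\
  (forall (N : nat) (x : nat -> C),
     0 <= Re (fsum D N (fun k => fsum D N (fun l =>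
               (Cconj (x k) * rho k l * x l)%C)))) /\
  has_csum D (fun k => rho k k) (RtoC 1).

Definition nondegenerate (D : option nat) (E : nat -> R) : Prop :=
  forall k l, inI D k -> inI D l -> E k = E l -> k = l.

Definition nondegenerate_gaps (D : option nat) (E : nat -> R) : Prop :=
  forall k l m n, inI D k -> inI D l -> inI D m -> inI D n ->
    E k - E l = E m - E n -> E k - E l <> 0 -> k = m /\ l = n.

Definition time_avg_is_R (f : R -> R) (a : R) : Prop :=
  (forall T, 0 < T -> ex_RInt f 0 T) /\
  is_lim (fun T => RInt f 0 T / T) p_infty a.

Definition time_avg_is (F : R -> C) (a : C) : Prop :=
  time_avg_is_R (fun t => Re (F t)) (Re a) /\
  time_avg_is_R (fun t => Im (F t)) (Im a).

Definition rhop (D : option nat) (E : nat -> R) (hbar : R)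
  (U rho : nat -> nat -> C) (n : nat) (tau : R) : C :=
  csum D (fun k => csum D (fun l =>
    (U n k * Cconj (U n l) * cexpi (- ((E k - E l) * tau / hbar)) * rho k l)%C)).

Definition mu (D : option nat) (U rho : nat -> nat -> C) (n : nat) : C :=
  csum D (fun k => (RtoC (Cmod (U n k) ^ 2) * rho k k)%C).

Definition nu (D : option nat) (U rho : nat -> nat -> C) (m n : nat) : C :=
  csum D (fun k => csum D (fun l =>
    if Nat.eqb k l then RtoC 0 else
    (U m k * Cconj (U m l) * Cconj (U n k) * U n l
       * RtoC (Cmod (rho k l) ^ 2))%C)).

(* Main.v *)
Require Import Defs.
From Stdlib Require Import Reals Arith Lia Lra Psatz.
From Coquelicot Require Import Coquelicot.
From Stdlib Require Import FunctionalExtensionality ClassicalEpsilon.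
Open Scope R_scope.

Ltac Ceq := apply injective_projections; simpl; ring.


Fixpoint rs (f : nat -> R) (N : nat) : R :=
  match N with O => 0 | S n => rs f n + f n end.
Fixpoint cs (f : nat -> C) (N : nat) : C :=
  match N with O => RtoC 0 | S n => Cplus (cs f n) (f n) end.

Lemma rs_ext f g N : (forall k, (k < N)%nat -> f k = g k) -> rs f N = rs g N.
Proof. induction N; simpl; intros H; auto. rewrite IHN, H; auto. Qed.
Lemma cs_ext f g N : (forall k, (k < N)%nat -> f k = g k) -> cs f N = cs g N.
Proof. induction N; simpl; intros H; auto. rewrite IHN, H; auto. Qed.
Lemma rs_plus f g N : rs (fun k => f k + g k) N = rs f N + rs g N.
Proof. induction N; simpl; [ring| rewrite IHN; ring]. Qed.
Lemma cs_plus f g N : cs (fun k => Cplus (f k) (g k)) N = Cplus (cs f N) (cs g N).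
Proof. induction N; simpl. Ceq. rewrite IHN; Ceq. Qed.
Lemma rs_scal c f N : rs (fun k => c * f k) N = c * rs f N.
Proof. induction N; simpl; [ring| rewrite IHN; ring]. Qed.
Lemma cs_scal c f N : cs (fun k => Cmult c (f k)) N = Cmult c (cs f N).
Proof. induction N; simpl. Ceq. rewrite IHN; Ceq. Qed.
Lemma rs_zero N : rs (fun _ => 0) N = 0.
Proof. induction N; simpl; [ring| rewrite IHN; ring]. Qed.
Lemma cs_zero N : cs (fun _ => RtoC 0) N = RtoC 0.
Proof. induction N; simpl; auto. rewrite IHN; Ceq. Qed.
Lemma rs_le f g N : (forall k, (k < N)%nat -> f k <= g k) -> rs f N <= rs g N.
Proof. induction N; simpl; intros H; [lra|]. specialize (IHN (fun k h => H k ltac:(lia))).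
 specialize (H N ltac:(lia)). lra. Qed.
Lemma rs_nonneg f N : (forall k, 0 <= f k) -> 0 <= rs f N.
Proof. intros H; induction N; simpl; [lra|]. specialize (H N); lra. Qed.
Lemma rs_mono f N M : (forall k, 0 <= f k) -> (N <= M)%nat -> rs f N <= rs f M.
Proof. intros H HNM; induction HNM; [lra|]. simpl. specialize (H m); lra. Qed.
Lemma rs_abs f N : Rabs (rs f N) <= rs (fun k => Rabs (f k)) N.
Proof. induction N; simpl. rewrite Rabs_R0; lra.
 eapply Rle_trans; [apply Rabs_triang|]. lra. Qed.
Lemma Cmod_cs f N : Cmod (cs f N) <= rs (fun k => Cmod (f k)) N.
Proof. induction N; simpl. rewrite Cmod_0; lra.
 eapply Rle_trans; [apply Cmod_triangle|]. lra. Qed.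
Lemma cs_Re f N : Re (cs f N) = rs (fun k => Re (f k)) N.
Proof. induction N; simpl; auto. rewrite <- IHN. reflexivity. Qed.
Lemma cs_Im f N : Im (cs f N) = rs (fun k => Im (f k)) N.
Proof. induction N; simpl; auto. rewrite <- IHN. reflexivity. Qed.
Lemma rs_sum_n f N : sum_n f N = rs f (S N).
Proof. induction N. rewrite sum_O; simpl. symmetry; apply Rplus_0_l.
 rewrite sum_Sn, IHN. simpl. reflexivity. Qed.
Lemma cs_sum_n f N : sum_n (G := C_AbelianMonoid) f N = cs f (S N).
Proof. induction N. rewrite sum_O; simpl. change (f 0%nat = Cplus (RtoC 0) (f 0%nat)); Ceq.
 rewrite sum_Sn, IHN. simpl. reflexivity. Qed.
Lemma rs_prod f g N M : rs (fun k => rs (fun l => f k * g l) N) M = rs f M * rs g N.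
Proof. induction M; simpl. ring. rewrite IHM, rs_scal. ring. Qed.
Lemma cs_prod f g N M : cs (fun k => cs (fun l => Cmult (f k) (g l)) N) M = Cmult (cs f M) (cs g N).
Proof. induction M; simpl. Ceq. rewrite IHM, cs_scal. Ceq. Qed.
Lemma rs_delta f k N : rs (fun l => if Nat.eqb l k then f l else 0) N = if Nat.ltb k N then f k else 0.
Proof. induction N; simpl; auto. rewrite IHN.
 destruct (Nat.eqb_spec N k); destruct (Nat.ltb_spec k N); destruct (Nat.ltb_spec k (S N)); subst; try lia; ring. Qed.
Lemma cs_delta f k N : cs (fun l => if Nat.eqb l k then f l else RtoC 0) N = if Nat.ltb k N then f k else RtoC 0.
Proof. induction N; simpl; auto. rewrite IHN.
 destruct (Nat.eqb_spec N k); destruct (Nat.ltb_spec k N); destruct (Nat.ltb_spec k (S N)); subst; try lia; Ceq. Qed.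

Lemma is_series_seq (a : nat -> R) l : is_series a l <-> is_lim_seq (fun N => rs a N) l.
Proof.
  split; intro H.
  - apply is_lim_seq_incr_1. apply is_lim_seq_ext with (sum_n a).
    intros; apply rs_sum_n. exact H.
  - assert (H1 : is_lim_seq (sum_n a) l).
    { apply is_lim_seq_incr_1 in H. apply is_lim_seq_ext with (2 := H).
      intros; symmetry; apply rs_sum_n. }
    exact H1.
Qed.

Lemma ser_lim a : ex_series a -> is_lim_seq (fun N => rs a N) (Series a).
Proof. intro H. apply is_series_seq. apply Series_correct, H. Qed.

Lemma ser_bound (a : nat -> R) B : (forall k, 0 <= a k) -> (forall N, rs a N <= B) ->
  ex_series a /\ Series a <= B.
Proof.
  intros Ha HB.
  assert (E : ex_finite_lim_seq (fun N => rs a N)).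
  { apply ex_finite_lim_seq_incr with B; auto. intros; simpl; specialize (Ha n); lra. }
  destruct E as [l Hl].
  assert (Hs : is_series a l) by (apply is_series_seq; exact Hl).
  split. exists l; exact Hs.
  rewrite (is_series_unique _ _ Hs).
  apply (is_lim_seq_le _ _ l B HB Hl (is_lim_seq_const B)).
Qed.



Lemma rs_le_Series a N : (forall k, 0 <= a k) -> ex_series a -> rs a N <= Series a.
Proof.
  intros Ha He. pose proof (ser_lim a He) as Hl.
  apply (is_lim_seq_le_loc (fun _ => rs a N) (fun M => rs a M) (rs a N) (Series a)); auto.
  - exists N. intros M HM. apply rs_mono; auto.
  - apply is_lim_seq_const.
Qed.

Lemma ser_tail (a b : nat -> R) N : (forall k, Rabs (a k) <= b k) -> ex_series b ->
  ex_series a /\ Rabs (Series a - rs a N) <= Series b - rs b N.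
Proof.
  intros Hab Hb.
  assert (Ha : ex_series a).
  { apply (ex_series_le (V := R_CompleteNormedModule) a b); auto. }
  split; auto.
  pose proof (ser_lim a Ha) as La. pose proof (ser_lim b Hb) as Lb.
  assert (L1 : is_lim_seq (fun M => Rabs (rs a M - rs a N)) (Rabs (Series a - rs a N))).
  { apply (is_lim_seq_abs _ (Finite (Series a - rs a N))).
    apply is_lim_seq_minus'; auto. apply is_lim_seq_const. }
  assert (L2 : is_lim_seq (fun M => rs b M - rs b N) (Series b - rs b N)).
  { apply is_lim_seq_minus'; auto. apply is_lim_seq_const. }
  apply (is_lim_seq_le_loc _ _ _ _ ) with (2 := L1) (3 := L2).
  exists N. intros M HM. induction HM.
  - rewrite Rminus_diag, Rabs_R0; lra.
  - simpl. replace (rs a m + a m - rs a N) with ((rs a m - rs a N) + a m) by ring.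
    eapply Rle_trans; [apply Rabs_triang|]. specialize (Hab m). lra.
Qed.

Lemma rs_minus f g N : rs (fun k => f k - g k) N = rs f N - rs g N.
Proof. induction N; simpl; [ring| rewrite IHN; ring]. Qed.

Lemma rs_term f k M : (forall k, 0 <= f k) -> (k < M)%nat -> f k <= rs f M.
Proof. intros H HM. induction HM; simpl.
 - pose proof (rs_nonneg f k H); lra.
 - specialize (H m); lra. Qed.

Lemma rs_lim (f : nat -> nat -> R) (l : nat -> R) K :
  (forall k, is_lim_seq (fun L => f L k) (l k)) -> is_lim_seq (fun L => rs (f L) K) (rs l K).
Proof. intro H. induction K; simpl.
 - apply is_lim_seq_const.
 - apply is_lim_seq_plus'; auto. Qed.

Lemma lim_ev (u : nat -> R) (l : R) eps : is_lim_seq u l -> 0 < eps ->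
  exists N0, forall N, (N0 <= N)%nat -> Rabs (u N - l) < eps.
Proof. intros H He. apply is_lim_seq_spec in H. unfold is_lim_seq' in H. destruct (H (mkposreal eps He)) as [N0 HN].
 exists N0; intros; apply HN; auto. Qed.

Lemma Series_nonneg a : (forall k, 0 <= a k) -> ex_series a -> 0 <= Series a.
Proof. intros H He. pose proof (rs_le_Series a 0 H He). simpl in H0. lra. Qed.

Lemma dbl (b : nat -> nat -> R) B : (forall k l, 0 <= b k l) ->
  (forall N, rs (fun k => rs (b k) N) N <= B) ->
  forall eps, 0 < eps -> exists N0, forall G : nat -> nat -> R,
    (forall k l, Rabs (G k l) <= b k l) -> forall N, (N0 <= N)%nat ->
    Rabs (Series (fun k => Series (G k)) - rs (fun k => rs (G k) N) N) <= eps.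
Proof.
  intros Hb HB eps Heps.
  assert (Hrow : forall k L, rs (b k) L <= B).
  { intros k L. set (M := max (S k) L).
    eapply Rle_trans; [|apply (HB M)].
    eapply Rle_trans; [apply (rs_mono (b k) L M); auto; lia|].
    apply (rs_term (fun k => rs (b k) M)); [intros; apply rs_nonneg; auto| lia]. }
  assert (Exr : forall k, ex_series (b k)).
  { intro k. apply (ser_bound (b k) B); auto. }
  set (beta := fun k => Series (b k)).
  assert (Hbeta0 : forall k, 0 <= beta k). { intro k; apply Series_nonneg; auto. }
  assert (Lrow : forall K, is_lim_seq (fun L => rs (fun k => rs (b k) L) K) (rs beta K)).
  { intro K. apply (rs_lim (fun L k => rs (b k) L)). intro k. apply ser_lim, Exr. }
  assert (HbetaB : forall K, rs beta K <= B).
  { intro K. assert (H := is_lim_seq_le _ _ _ _ (fun L => Rle_trans _ _ _ (rs_le _ (fun k => rs (b k) (max K L)) K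
        (fun k _ => rs_mono (b k) L (max K L) (Hb k) (Nat.le_max_r K L)))
        (Rle_trans _ _ _ (rs_mono (fun k => rs (b k) (max K L)) K (max K L) (fun k => rs_nonneg _ _ (Hb k)) (Nat.le_max_l K L)) (HB (max K L))))
        (Lrow K) (is_lim_seq_const B)). exact H. }
  assert (Exb : ex_series beta) by (apply (ser_bound beta B); auto).
  destruct (lim_ev _ _ (eps/2) (ser_lim beta Exb) ltac:(lra)) as [K HK].
  specialize (HK K (le_n K)).
  destruct (lim_ev _ _ (eps/2) (Lrow K) ltac:(lra)) as [L HL].
  specialize (HL L (le_n L)).
  exists (max K L). intros G HG N HN.
  assert (Eg : forall k, ex_series (G k) /\ Rabs (Series (G k) - rs (G k) N) <= beta k - rs (b k) N).
  { intro k. apply ser_tail; auto. }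
  assert (Eg0 : forall k, Rabs (Series (G k)) <= beta k).
  { intro k. destruct (ser_tail (G k) (b k) 0 (HG k) (Exr k)) as [_ H]. simpl in H.
    rewrite !Rminus_0_r in H; exact H. }
  destruct (ser_tail (fun k => Series (G k)) beta N Eg0 Exb) as [_ H1].
  assert (H2 : Rabs (rs (fun k => Series (G k)) N - rs (fun k => rs (G k) N) N) <=
               rs beta N - rs (fun k => rs (b k) N) N).
  { rewrite <- rs_minus, <- rs_minus. eapply Rle_trans; [apply rs_abs|].
    apply rs_le. intros k _. apply Eg. }
  assert (H3 : rs (fun k => rs (b k) L) K <= rs (fun k => rs (b k) N) N).
  { eapply Rle_trans. apply (rs_le _ (fun k => rs (b k) N)). intros k _. apply rs_mono; auto; lia.
    apply rs_mono. intro; apply rs_nonneg; auto. lia. }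
  replace (Series (fun k => Series (G k)) - rs (fun k => rs (G k) N) N) with
    ((Series (fun k => Series (G k)) - rs (fun k => Series (G k)) N) +
     (rs (fun k => Series (G k)) N - rs (fun k => rs (G k) N) N)) by ring.
  eapply Rle_trans; [apply Rabs_triang|].
  apply Rabs_def2 in HK. apply Rabs_def2 in HL. fold beta in HK.
  lra.
Qed.

Definition csum0 (f : nat -> C) : C :=
  (Series (fun k => Re (f k)), Series (fun k => Im (f k))).

Lemma im_le_Cmod (z : C) : Rabs (Im z) <= Cmod z.
Proof. eapply Rle_trans; [|apply Rmax_Cmod]. apply Rmax_r. Qed.

Lemma Cmod_le_ReIm (z : C) : Cmod z <= Rabs (Re z) + Rabs (Im z).
Proof. unfold Cmod. rewrite <- (sqrt_Rsqr (Rabs (Re z) + Rabs (Im z))).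
 2: { pose proof (Rabs_pos (Re z)); pose proof (Rabs_pos (Im z)); lra. }
 apply sqrt_le_1_alt. unfold Rsqr. unfold Re, Im.
 pose proof (Rabs_pos (fst z)); pose proof (Rabs_pos (snd z)).
 replace (fst z ^ 2) with (Rabs (fst z) * Rabs (fst z)) by (rewrite <- Rabs_mult; simpl; rewrite Rmult_1_r; apply Rabs_pos_eq; nra).
 replace (snd z ^ 2) with (Rabs (snd z) * Rabs (snd z)) by (rewrite <- Rabs_mult; simpl; rewrite Rmult_1_r; apply Rabs_pos_eq; nra).
 nra. Qed.

Lemma cs_bound2 (G : nat -> nat -> C) b N : (forall k l, Cmod (G k l) <= b k l) ->
  Cmod (cs (fun k => cs (G k) N) N) <= rs (fun k => rs (b k) N) N.
Proof. intro H. eapply Rle_trans; [apply Cmod_cs|]. apply rs_le; intros k _.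
 eapply Rle_trans; [apply Cmod_cs|]. apply rs_le; auto. Qed.

Lemma dblC (b : nat -> nat -> R) B : (forall k l, 0 <= b k l) ->
  (forall N, rs (fun k => rs (b k) N) N <= B) ->
  forall eps, 0 < eps -> exists N0, forall G : nat -> nat -> C,
    (forall k l, Cmod (G k l) <= b k l) -> forall N, (N0 <= N)%nat ->
    Cmod (Cminus (csum0 (fun k => csum0 (G k))) (cs (fun k => cs (G k) N) N)) <= eps.
Proof.
  intros Hb HB eps He.
  destruct (dbl b B Hb HB (eps/2) ltac:(lra)) as [N0 HN0].
  exists N0. intros G HG N HN.
  eapply Rle_trans; [apply Cmod_le_ReIm|].
  assert (H1 := HN0 (fun k l => Re (G k l)) (fun k l => Rle_trans _ _ _ (re_le_Cmod _) (HG k l)) N HN).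
  assert (H2 := HN0 (fun k l => Im (G k l)) (fun k l => Rle_trans _ _ _ (im_le_Cmod _) (HG k l)) N HN).
  assert (E1 : Re (Cminus (csum0 (fun k => csum0 (G k))) (cs (fun k => cs (G k) N) N)) =
     Series (fun k => Series (fun l => Re (G k l))) - rs (fun k => rs (fun l => Re (G k l)) N) N).
  { unfold Cminus, Cplus, Copp; simpl. rewrite cs_Re. unfold Rminus; f_equal. f_equal.
    apply rs_ext; intros. rewrite cs_Re. reflexivity. }
  assert (E2 : Im (Cminus (csum0 (fun k => csum0 (G k))) (cs (fun k => cs (G k) N) N)) =
     Series (fun k => Series (fun l => Im (G k l))) - rs (fun k => rs (fun l => Im (G k l)) N) N).
  { unfold Cminus, Cplus, Copp; simpl. rewrite cs_Im. unfold Rminus; f_equal. f_equal.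
    apply rs_ext; intros. rewrite cs_Im. reflexivity. }
  rewrite E1, E2. lra.
Qed.

Lemma approx_R (f : R -> R) (a : R) :
  (forall eps, 0 < eps -> exists g c, time_avg_is_R g c /\
     (forall t, Rabs (f t - g t) <= eps) /\ Rabs (a - c) <= eps) ->
  time_avg_is_R f a.
Proof.
  intros H.
  assert (Hint : forall T, 0 < T -> ex_RInt f 0 T).
  { intros T HT.
    assert (Hs : forall n : nat, { g : R -> R | (forall T, 0 < T -> ex_RInt g 0 T) /\
                    forall t, Rabs (f t - g t) <= / (INR n + 1) }).
    { intro n. apply constructive_indefinite_description.
      assert (Hn : 0 < / (INR n + 1)) by (apply Rinv_0_lt_compat; pose proof (pos_INR n); lra).
      destruct (H _ Hn) as [g [c [[Hg _] [Hfg _]]]]. exists g; auto. }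
    set (gs := fun n => proj1_sig (Hs n)).
    destruct (filterlim_RInt gs 0 T eventually eventually_filter f (fun n => RInt (gs n) 0 T))
      as [l [_ Hl]].
    - intro n. apply RInt_correct. apply (proj1 (proj2_sig (Hs n))); auto.
    - apply filterlim_locally. intro eps.
      destruct (INR_archimed eps 1 (cond_pos eps)) as [n0 Hn0].
      exists n0. intros n Hn t. change (Rabs (gs n t - f t) < eps).
      rewrite Rabs_minus_sym. eapply Rle_lt_trans. apply (proj2 (proj2_sig (Hs n))).
      assert (INR n0 <= INR n) by (apply le_INR; auto).
      pose proof (pos_INR n0). pose proof (cond_pos eps).
      apply (Rmult_lt_reg_r (INR n + 1)). lra. rewrite Rinv_l by lra. nra.
    - exists l; exact Hl. }
  split; auto.
  apply is_lim_spec. intro eps. simpl.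
  destruct (H (eps/4)) as [g [c [[Hg1 Hg2] [Hfg Hac]]]]. { pose proof (cond_pos eps); lra. }
  apply is_lim_spec in Hg2. destruct (Hg2 (mkposreal (eps/4) ltac:(pose proof (cond_pos eps); lra))) as [M HM].
  exists (Rmax M 1). intros T HT.
  assert (HT1 : 0 < T) by (pose proof (Rmax_r M 1); lra).
  assert (HTM : M < T) by (pose proof (Rmax_l M 1); lra).
  specialize (HM T HTM). simpl in HM.
  assert (Hd : Rabs (RInt f 0 T - RInt g 0 T) <= (T - 0) * (eps/4)).
  { assert (E : RInt f 0 T - RInt g 0 T = RInt (fun x => f x - g x) 0 T).
    { symmetry. apply (RInt_minus f g 0 T (Hint T HT1) (Hg1 T HT1)). }
    rewrite E. apply abs_RInt_le_const. lra.
    apply (ex_RInt_minus f g 0 T (Hint T HT1) (Hg1 T HT1)).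
    intros; apply Hfg. }
  replace (RInt f 0 T / T - a) with ((RInt f 0 T - RInt g 0 T) / T + (RInt g 0 T / T - c) + (c - a))
    by (field; lra).
  eapply Rle_lt_trans; [apply Rabs_triang|].
  eapply Rle_lt_trans; [apply Rplus_le_compat_r; apply Rabs_triang|].
  rewrite Rabs_minus_sym in Hac.
  assert (Rabs ((RInt f 0 T - RInt g 0 T) / T) <= eps/4).
  { unfold Rdiv. rewrite Rabs_mult, Rabs_inv, (Rabs_pos_eq T) by lra.
    apply (Rmult_le_reg_r T); [lra|]. rewrite Rmult_assoc, Rinv_l by lra. nra. }
  pose proof (cond_pos eps). lra.
Qed.

Lemma tavR_ext f g a : (forall t, f t = g t) -> time_avg_is_R f a -> time_avg_is_R g a.
Proof. intros H. replace g with f; auto. apply functional_extensionality; auto. Qed.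

Lemma tavR_plus f g a b : time_avg_is_R f a -> time_avg_is_R g b ->
  time_avg_is_R (fun t => f t + g t) (a + b).
Proof. intros [Hf Lf] [Hg Lg]. split.
 - intros T HT. apply (ex_RInt_plus f g); auto.
 - apply is_lim_ext_loc with (fun T => RInt f 0 T / T + RInt g 0 T / T).
   + exists 0. intros T HT. rewrite (RInt_plus f g) by auto. change (RInt f 0 T / T + RInt g 0 T / T = (RInt f 0 T + RInt g 0 T) / T). field; lra.
   + apply is_lim_plus'; auto. Qed.

Lemma tavR_scal c f a : time_avg_is_R f a -> time_avg_is_R (fun t => c * f t) (c * a).
Proof. intros [Hf Lf]. split.
 - intros T HT. apply (ex_RInt_scal f 0 T c); auto.
 - apply is_lim_ext_loc with (fun T => c * (RInt f 0 T / T)).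
   + exists 0. intros T HT. replace (RInt (fun t => c * f t) 0 T) with (c * RInt f 0 T). field; lra.
     symmetry; apply (RInt_scal f 0 T c); auto.
   + apply (is_lim_scal_l _ c p_infty a); auto. Qed.

Lemma tavR_const c : time_avg_is_R (fun _ => c) c.
Proof. split.
 - intros; apply ex_RInt_const.
 - apply is_lim_ext_loc with (fun _ => c).
   + exists 0. intros T HT. rewrite RInt_const. change (c = ((T - 0) * c) / T). field; lra.
   + apply is_lim_const. Qed.

Lemma tavR_bdd f K : (forall T, 0 < T -> ex_RInt f 0 T) -> (forall T, 0 < T -> Rabs (RInt f 0 T) <= K) ->
  time_avg_is_R f 0.
Proof. intros Hf HK. split; auto.
 apply is_lim_spec. intro eps. simpl.
 assert (HK0 : 0 <= K) by (specialize (HK 1 ltac:(lra)); pose proof (Rabs_pos (RInt f 0 1)); lra).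
 exists (K / eps + 1). intros T HT.
 pose proof (cond_pos eps) as He.
 assert (HT0 : 0 < T). { assert (0 <= K / eps) by (apply Rdiv_le_0_compat; lra). lra. }
 rewrite Rminus_0_r. unfold Rdiv. rewrite Rabs_mult, Rabs_inv, (Rabs_pos_eq T) by lra.
 apply (Rmult_lt_reg_r T); [lra|]. rewrite Rmult_assoc, Rinv_l by lra.
 specialize (HK T HT0). assert (K < eps * T).
 { assert (K / eps * eps = K) by (field; lra). nra. }
 lra. Qed.

Lemma tavR_cos w : w <> 0 -> time_avg_is_R (fun t => cos (w * t)) 0.
Proof. intros Hw.
 assert (Hi : forall T, is_RInt (fun t => cos (w * t)) 0 T (minus (sin (w * T) / w) (sin (w * 0) / w))).
 { intro T. apply (is_RInt_derive (fun t => sin (w * t) / w)).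
   - intros x _. auto_derive; auto. field; auto.
   - intros x _. apply continuity_pt_filterlim. apply derivable_continuous_pt. reg. }
 apply tavR_bdd with (2 / Rabs w).
 - intros T _. exists (minus (sin (w * T) / w) (sin (w * 0) / w)). apply Hi.
 - intros T _. rewrite (is_RInt_unique _ _ _ _ (Hi T)).
   change (Rabs (sin (w * T) / w - sin (w * 0) / w) <= 2 / Rabs w).
   replace (sin (w * T) / w - sin (w * 0) / w) with ((sin (w * T) - sin (w*0)) / w) by (field; auto).
   unfold Rdiv. rewrite Rabs_mult, Rabs_inv. apply Rmult_le_compat_r.
   apply Rlt_le, Rinv_0_lt_compat, Rabs_pos_lt; auto.
   eapply Rle_trans; [apply Rabs_triang|]. rewrite Rabs_Ropp.
   pose proof (Rabs_le (sin (w*T)) 1 ltac:(pose proof (SIN_bound (w*T)); lra)).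
   pose proof (Rabs_le (sin (w*0)) 1 ltac:(pose proof (SIN_bound (w*0)); lra)). lra.
Qed.

Lemma tavR_sin w : w <> 0 -> time_avg_is_R (fun t => sin (w * t)) 0.
Proof. intros Hw.
 assert (Hi : forall T, is_RInt (fun t => sin (w * t)) 0 T (minus (- cos (w * T) / w) (- cos (w * 0) / w))).
 { intro T. apply (is_RInt_derive (fun t => - cos (w * t) / w)).
   - intros x _. auto_derive; auto. field; auto.
   - intros x _. apply continuity_pt_filterlim. apply derivable_continuous_pt. reg. }
 apply tavR_bdd with (2 / Rabs w).
 - intros T _. exists (minus (- cos (w * T) / w) (- cos (w * 0) / w)). apply Hi.
 - intros T _. rewrite (is_RInt_unique _ _ _ _ (Hi T)).
   change (Rabs (- cos (w * T) / w - - cos (w * 0) / w) <= 2 / Rabs w).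
   replace (- cos (w * T) / w - - cos (w * 0) / w) with ((cos (w*0) - cos (w * T)) / w) by (field; auto).
   unfold Rdiv. rewrite Rabs_mult, Rabs_inv. apply Rmult_le_compat_r.
   apply Rlt_le, Rinv_0_lt_compat, Rabs_pos_lt; auto.
   eapply Rle_trans; [apply Rabs_triang|]. rewrite Rabs_Ropp.
   pose proof (Rabs_le (cos (w*T)) 1 ltac:(pose proof (COS_bound (w*T)); lra)).
   pose proof (Rabs_le (cos (w*0)) 1 ltac:(pose proof (COS_bound (w*0)); lra)). lra.
Qed.

Lemma tav_ext F G a : (forall t, F t = G t) -> time_avg_is F a -> time_avg_is G a.
Proof. intros H. replace G with F; auto. apply functional_extensionality; auto. Qed.

Lemma tav_plus F G a b : time_avg_is F a -> time_avg_is G b ->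
  time_avg_is (fun t => Cplus (F t) (G t)) (Cplus a b).
Proof. intros [H1 H2] [H3 H4]. split; simpl.
 apply (tavR_plus (fun t => Re (F t)) (fun t => Re (G t))); auto.
 apply (tavR_plus (fun t => Im (F t)) (fun t => Im (G t))); auto. Qed.

Lemma tav_scal c F a : time_avg_is F a -> time_avg_is (fun t => Cmult c (F t)) (Cmult c a).
Proof. intros [H1 H2]. split; simpl.
 - apply tavR_ext with (fun t => Re c * Re (F t) + (- Im c) * Im (F t)).
   intros; unfold Re, Im; simpl; ring.
   replace (fst c * fst a - snd c * snd a) with (Re c * Re a + (- Im c) * Im a) by (unfold Re, Im; ring).
   apply tavR_plus; apply tavR_scal; auto.
 - apply tavR_ext with (fun t => Re c * Im (F t) + Im c * Re (F t)).
   intros; unfold Re, Im; simpl; ring.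
   replace (fst c * snd a + snd c * fst a) with (Re c * Im a + Im c * Re a) by (unfold Re, Im; ring).
   apply tavR_plus; apply tavR_scal; auto. Qed.

Lemma tav_const c : time_avg_is (fun _ => c) c.
Proof. split; apply tavR_const. Qed.

Lemma tav_cexpi w : w <> 0 -> time_avg_is (fun t => cexpi (w * t)) (RtoC 0).
Proof. intro Hw. split; simpl. apply tavR_cos; auto. apply tavR_sin; auto. Qed.

Lemma tav_cs (F : nat -> R -> C) a N : (forall k, time_avg_is (F k) (a k)) ->
  time_avg_is (fun t => cs (fun k => F k t) N) (cs a N).
Proof. intro H. induction N; simpl.
 - apply tav_const.
 - apply (tav_plus (fun t => cs (fun k => F k t) N) (F N)); auto. Qed.

Lemma approx_C (F : R -> C) (a : C) :
  (forall eps, 0 < eps -> exists G c, time_avg_is G c /\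
     (forall t, Cmod (Cminus (F t) (G t)) <= eps) /\ Cmod (Cminus a c) <= eps) ->
  time_avg_is F a.
Proof. intro H. split.
 - apply approx_R. intros eps He. destruct (H eps He) as [G [c [[H1 _] [H2 H3]]]].
   exists (fun t => Re (G t)), (Re c). split; auto. split.
   + intro t. eapply Rle_trans; [apply (re_le_Cmod (Cminus (F t) (G t)))|apply (H2 t)].
   + eapply Rle_trans; [apply (re_le_Cmod (Cminus a c))|exact H3].
 - apply approx_R. intros eps He. destruct (H eps He) as [G [c [[_ H1] [H2 H3]]]].
   exists (fun t => Im (G t)), (Im c). split; auto. split.
   + intro t. eapply Rle_trans; [apply (im_le_Cmod (Cminus (F t) (G t)))|apply (H2 t)].
   + eapply Rle_trans; [apply (im_le_Cmod (Cminus a c))|exact H3].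
Qed.

Lemma approx_seq (F : R -> C) (a : C) (Fn : nat -> R -> C) (an : nat -> C) :
  (forall N, time_avg_is (Fn N) (an N)) ->
  (forall eps, 0 < eps -> exists N0, forall N, (N0 <= N)%nat ->
     (forall t, Cmod (Cminus (F t) (Fn N t)) <= eps) /\ Cmod (Cminus a (an N)) <= eps) ->
  time_avg_is F a.
Proof. intros H1 H2. apply approx_C. intros eps He. destruct (H2 eps He) as [N0 HN].
 exists (Fn N0), (an N0). split; auto. Qed.

Lemma hc_Re D f l : has_csum D f l ->
  is_series (fun k => Re (mask D f k)) (Re l) /\ is_series (fun k => Im (mask D f k)) (Im l).
Proof. unfold has_csum. intro H.
 unfold is_series in H. pose proof (proj1 (@filterlim_locally nat (NormedModule.UniformSpace C_AbsRing C_NormedModule) eventually (@filter_filter _ _ eventually_filter) _ _) H) as H0; clear H; rename H0 into H.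
 split; apply filterlim_locally; intro eps; destruct (H eps) as [N0 HN]; exists N0; intros N HNN;
  specialize (HN N HNN); destruct HN as [H1 H2].
 - rewrite rs_sum_n. rewrite cs_sum_n in H1. rewrite cs_Re in H1. exact H1.
 - rewrite rs_sum_n. rewrite cs_sum_n in H2. rewrite cs_Im in H2. exact H2.
Qed.


Lemma cs_two (g : nat -> C) k0 l0 M : k0 <> l0 -> (forall j, j <> k0 -> j <> l0 -> g j = RtoC 0) ->
  cs g M = Cplus (if Nat.ltb k0 M then g k0 else RtoC 0) (if Nat.ltb l0 M then g l0 else RtoC 0).
Proof. intros Hne H. induction M; simpl. Ceq. rewrite IHM.
 destruct (Nat.ltb_spec k0 M); destruct (Nat.ltb_spec k0 (S M));
 destruct (Nat.ltb_spec l0 M); destruct (Nat.ltb_spec l0 (S M)); try lia;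
 try (assert (M = k0) by lia; subst; Ceq);
 try (assert (M = l0) by lia; subst; Ceq);
 (rewrite (H M) by lia; Ceq). Qed.

Lemma cs_one (g : nat -> C) k0 M : (forall j, j <> k0 -> g j = RtoC 0) ->
  cs g M = if Nat.ltb k0 M then g k0 else RtoC 0.
Proof. intros H. induction M; simpl. auto. rewrite IHM.
 destruct (Nat.ltb_spec k0 M); destruct (Nat.ltb_spec k0 (S M)); try lia;
 try (assert (M = k0) by lia; subst; Ceq);
 (rewrite (H M) by lia; Ceq). Qed.

Section Dens.
Context (D : option nat) (rho : nat -> nat -> C) (hrho : density_mx D rho).

Lemma rho_diag_im k : inI D k -> Im (rho k k) = 0.
Proof. intro Hk. destruct hrho as [H _]. specialize (H k k Hk Hk).
 unfold Im. apply (f_equal snd) in H. simpl in H. lra. Qed.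

Lemma rho_diag_re k : inI D k -> 0 <= Re (rho k k).
Proof. intro Hk. destruct hrho as [_ [H _]].
 specialize (H k (fun j => if Nat.eqb j k then RtoC 1 else RtoC 0)).
 unfold fsum in H. rewrite cs_sum_n in H.
 rewrite (cs_one _ k) in H.
 - rewrite (proj2 (Nat.ltb_lt k (S k)) ltac:(lia)) in H. unfold mask in H. rewrite Hk in H.
   rewrite cs_sum_n in H. rewrite (cs_one _ k) in H.
   + rewrite (proj2 (Nat.ltb_lt k (S k)) ltac:(lia)) in H. unfold mask in H. rewrite Hk in H.
     rewrite Nat.eqb_refl in H. unfold Re. simpl in H. simpl. lra.
   + intros j Hj. unfold mask. destruct (inIb D j); auto. rewrite (proj2 (Nat.eqb_neq j k) Hj). Ceq.
 - intros j Hj. unfold mask. destruct (inIb D j); auto. rewrite (proj2 (Nat.eqb_neq j k) Hj).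
   rewrite cs_sum_n. transitivity (cs (fun _ => RtoC 0) (S k)); [|apply cs_zero]. apply cs_ext. intros. destruct (inIb D k0); auto. Ceq.
Qed.

Lemma cs_mask_zero f M : (forall j, f j = RtoC 0) -> cs (mask D f) M = RtoC 0.
Proof. intro H. transitivity (cs (fun _ => RtoC 0) M); [|apply cs_zero].
 apply cs_ext; intros. unfold mask. destruct (inIb D k); auto. Qed.

Lemma mask_in f j : inI D j -> mask D f j = f j.
Proof. intro H; unfold mask; rewrite H; auto. Qed.

Lemma qform2 k l a c : k <> l -> inI D k -> inI D l ->
  let x := fun j => if Nat.eqb j k then a else if Nat.eqb j l then c else RtoC 0 in
  fsum D (max k l) (fun i => fsum D (max k l) (fun j => Cmult (Cmult (Cconj (x i)) (rho i j)) (x j))) =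
  Cplus (Cplus (Cmult (Cmult (Cconj a) (rho k k)) a) (Cmult (Cmult (Cconj a) (rho k l)) c))
        (Cplus (Cmult (Cmult (Cconj c) (rho l k)) a) (Cmult (Cmult (Cconj c) (rho l l)) c)).
Proof.
  intros Hkl Hk Hl x. unfold fsum. rewrite cs_sum_n.
  assert (Hx : forall j, j <> k -> j <> l -> x j = RtoC 0).
  { intros j H1 H2. unfold x. rewrite (proj2 (Nat.eqb_neq j k) H1), (proj2 (Nat.eqb_neq j l) H2). auto. }
  assert (Hxk : x k = a) by (unfold x; rewrite Nat.eqb_refl; auto).
  assert (Hxl : x l = c) by (unfold x; rewrite (proj2 (Nat.eqb_neq l k) (not_eq_sym Hkl)), Nat.eqb_refl; auto).
  assert (Hin : forall i, sum_n (G := C_AbelianMonoid) (mask D (fun j => Cmult (Cmult (Cconj (x i)) (rho i j)) (x j))) (max k l) =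
     Cplus (Cmult (Cmult (Cconj (x i)) (rho i k)) (x k)) (Cmult (Cmult (Cconj (x i)) (rho i l)) (x l))).
  { intro i. rewrite cs_sum_n, (cs_two _ k l) by (auto; intros j H1 H2; unfold mask; destruct (inIb D j); auto; rewrite (Hx j H1 H2); Ceq).
    rewrite (proj2 (Nat.ltb_lt k (S (max k l))) ltac:(lia)), (proj2 (Nat.ltb_lt l (S (max k l))) ltac:(lia)).
    unfold mask. rewrite Hk, Hl. auto. }
  rewrite (cs_two _ k l); auto.
  - rewrite (proj2 (Nat.ltb_lt k (S (max k l))) ltac:(lia)), (proj2 (Nat.ltb_lt l (S (max k l))) ltac:(lia)).
    rewrite (mask_in _ k Hk), (mask_in _ l Hl). rewrite !Hin, Hxk, Hxl. reflexivity.
  - intros j H1 H2. unfold mask at 1. destruct (inIb D j); auto. rewrite Hin, (Hx j H1 H2). Ceq.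
Qed.

Lemma rho_off k l : k <> l -> inI D k -> inI D l ->
  Cmod (rho k l) ^ 2 <= Re (rho k k) * Re (rho l l).
Proof.
  intros Hkl Hk Hl.
  assert (Hq : forall beta, 0 <= Re (rho k k) + 2 * beta * Cmod (rho k l) ^ 2 + beta ^ 2 * Cmod (rho k l) ^ 2 * Re (rho l l)).
  { intro beta. destruct hrho as [Hh [Hp _]].
    pose proof (qform2 k l (RtoC 1) (Cmult (RtoC beta) (Cconj (rho k l))) Hkl Hk Hl) as Q.
    specialize (Hp (max k l) (fun j => if Nat.eqb j k then RtoC 1 else if Nat.eqb j l then Cmult (RtoC beta) (Cconj (rho k l)) else RtoC 0)).
    cbv beta zeta in Hp, Q. rewrite Q in Hp. clear Q.
    rewrite (Hh k l Hk Hl) in Hp.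
    pose proof (rho_diag_im k Hk) as Ik. pose proof (rho_diag_im l Hl) as Il.
    rewrite Cmod2_alt.
    unfold Re, Im in *. destruct (rho k l) as [p q]. destruct (rho k k) as [rk ik]. destruct (rho l l) as [rl il].
    simpl in *. subst. nra. }
  pose proof (rho_diag_re k Hk). pose proof (rho_diag_re l Hl).
  set (s := Cmod (rho k l) ^ 2) in *. set (rk := Re (rho k k)) in *. set (rl := Re (rho l l)) in *.
  assert (Hs : 0 <= s) by (unfold s; apply pow_le, Cmod_ge_0).
  destruct (Rle_lt_or_eq_dec 0 rl H0) as [Hrl | Hrl].
  - specialize (Hq (- / rl)).
    assert (E : rk + 2 * - / rl * s + (- / rl) ^ 2 * s * rl = (rk * rl - s) / rl) by (field; lra).
    rewrite E in Hq. apply Rmult_le_compat_r with (r := rl) in Hq; [|lra].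
    unfold Rdiv in Hq. rewrite Rmult_assoc, Rinv_l, Rmult_0_l in Hq by lra. lra.
  - subst rl. rewrite <- Hrl. rewrite Rmult_0_r.
    destruct (Rle_lt_or_eq_dec 0 s Hs) as [Hs' | Hs']; [|lra].
    specialize (Hq (- (rk + 1) / (2 * s))). rewrite <- Hrl in Hq.
    assert (E : rk + 2 * (- (rk + 1) / (2 * s)) * s + (- (rk + 1) / (2 * s)) ^ 2 * s * 0 = -1) by (field; lra).
    lra.
Qed.
End Dens.


Lemma Series_zero : Series (fun _ => 0) = 0.
Proof. apply is_series_unique. apply is_series_seq.
 apply is_lim_seq_ext with (fun _ => 0). intro; symmetry; apply rs_zero. apply is_lim_seq_const. Qed.

Lemma csum_mask2 D (g : nat -> nat -> C) :
  csum D (fun k => csum D (fun l => g k l)) =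
  csum0 (fun k => csum0 (fun l => if andb (inIb D k) (inIb D l) then g k l else RtoC 0)).
Proof. unfold csum, csum0. f_equal; apply Series_ext; intro k; unfold mask at 1;
 destruct (inIb D k) eqn:Hk; simpl;
 first [rewrite Series_zero; reflexivity | f_equal; apply Series_ext; intro l; unfold mask; destruct (inIb D l); reflexivity].
Qed.

Lemma csum_mask1 D (g : nat -> C) : csum D g = csum0 (mask D g).
Proof. reflexivity. Qed.

Lemma csum0_conv (h : nat -> C) : ex_series (fun k => Re (h k)) -> ex_series (fun k => Im (h k)) ->
  forall eps, 0 < eps -> exists N0, forall N, (N0 <= N)%nat -> Cmod (Cminus (csum0 h) (cs h N)) <= eps.
Proof. intros H1 H2 eps He.
 destruct (lim_ev _ _ (eps/2) (ser_lim _ H1) ltac:(lra)) as [N1 HN1].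
 destruct (lim_ev _ _ (eps/2) (ser_lim _ H2) ltac:(lra)) as [N2 HN2].
 exists (max N1 N2). intros N HN. eapply Rle_trans; [apply Cmod_le_ReIm|].
 specialize (HN1 N ltac:(lia)). specialize (HN2 N ltac:(lia)).
 unfold csum0, Cminus, Cplus, Copp, Re, Im in *; simpl. rewrite cs_Re, cs_Im.
 rewrite Rabs_minus_sym in HN1, HN2. unfold Re, Im in *. unfold Rminus in *. lra. Qed.

Lemma Cmod_prod_diff a b a' b' : Cmod (Cminus (Cmult a b) (Cmult a' b')) <=
  Cmod a * Cmod (Cminus b b') + Cmod b' * Cmod (Cminus a a').
Proof. replace (Cminus (Cmult a b) (Cmult a' b')) with (Cplus (Cmult a (Cminus b b')) (Cmult b' (Cminus a a'))) by Ceq.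
 eapply Rle_trans; [apply Cmod_triangle|]. rewrite !Cmod_mult. lra. Qed.

Lemma Cmod_cexpi x : Cmod (cexpi x) = 1.
Proof. unfold Cmod, cexpi; simpl. pose proof (sin2_cos2 x). unfold Rsqr in H.
 replace (cos x * (cos x * 1) + sin x * (sin x * 1)) with 1 by nra. apply sqrt_1. Qed.

Lemma cexpi_add x y : Cmult (cexpi x) (cexpi y) = cexpi (x + y).
Proof. unfold cexpi. rewrite cos_plus, sin_plus. Ceq. Qed.

Lemma tav_exp (z : C) w : time_avg_is (fun t => Cmult z (cexpi (w * t))) (if Req_dec_T w 0 then z else RtoC 0).
Proof. destruct (Req_dec_T w 0).
 - subst. apply tav_ext with (fun _ => z). intro t. rewrite Rmult_0_l. unfold cexpi. rewrite cos_0, sin_0. Ceq.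
   apply tav_const.
 - replace (RtoC 0) with (Cmult z (RtoC 0)) by Ceq. apply tav_scal, tav_cexpi; auto. Qed.

Lemma Cmod_le_of N (f : nat -> C) (g : nat -> R) : (forall k, Cmod (f k) <= g k) -> Cmod (cs f N) <= rs g N.
Proof. intro H. eapply Rle_trans; [apply Cmod_cs|]. apply rs_le; auto. Qed.


Section Main.
Context (D : option nat) (E : nat -> R) (hbar : R) (U rho0 : nat -> nat -> C)
  (hA : nondegenerate D E) (hB : nondegenerate_gaps D E)
  (hrho : density_mx D rho0) (hU : unitary_mx D U) (hhbar : 0 < hbar).

Definition rd k := Re (mask D (fun k => rho0 k k) k).
Definition ud n k := if inIb D k then Cmod (U n k) else 0.

Lemma rd_nonneg k : 0 <= rd k.
Proof. unfold rd, mask. destruct (inIb D k) eqn:Hk. apply (rho_diag_re D rho0 hrho k Hk). simpl; lra. Qed.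

Lemma rd_sum N : rs rd N <= 1.
Proof. destruct hrho as [_ [_ Ht]]. destruct (hc_Re _ _ _ Ht) as [H _].
 assert (Hs : Series rd = 1) by (apply is_series_unique; exact H).
 rewrite <- Hs. apply rs_le_Series. apply rd_nonneg. exists (Re (RtoC 1)); exact H. Qed.

Lemma ud_nonneg n k : 0 <= ud n k.
Proof. unfold ud. destruct (inIb D k). apply Cmod_ge_0. lra. Qed.

Lemma ud_sum n N : inI D n -> rs (fun k => ud n k ^ 2) N <= 1.
Proof. intro Hn. destruct hU as [H1 _]. specialize (H1 n n Hn Hn).
 destruct (hc_Re _ _ _ H1) as [H _].
 assert (E1 : forall k, Re (mask D (fun k => Cmult (U n k) (Cconj (U n k))) k) = ud n k ^ 2).
 { intro k. unfold mask, ud. destruct (inIb D k). rewrite Cmod2_alt. unfold Re, Im; simpl. ring. simpl; ring. }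
 assert (E2 : Re (delta n n) = 1) by (unfold delta; rewrite Nat.eqb_refl; reflexivity).
 rewrite E2 in H.
 assert (H' : is_series (fun k => ud n k ^ 2) 1).
 { eapply is_series_ext; [|exact H]. exact E1. }
 rewrite <- (is_series_unique _ _ H'). apply rs_le_Series.
 intro; apply pow_le, ud_nonneg. exists 1; exact H'. Qed.

Lemma ud_le1 n k : inI D n -> ud n k <= 1.
Proof. intro Hn. pose proof (ud_sum n (S k) Hn).
 pose proof (rs_term (fun k => ud n k ^ 2) k (S k) (fun j => pow_le _ 2 (ud_nonneg n j)) ltac:(lia)).
 cbv beta in H0. pose proof (ud_nonneg n k). nra. Qed.

Lemma rho_bnd k l : inI D k -> inI D l -> Cmod (rho0 k l) ^ 2 <= rd k * rd l.
Proof. intros Hk Hl. destruct (Nat.eq_dec k l).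
 - subst. unfold rd, mask. rewrite Hl. rewrite Cmod2_alt.
   rewrite (rho_diag_im D rho0 hrho l Hl). right; ring.
 - unfold rd, mask. rewrite Hk, Hl. apply (rho_off D rho0 hrho); auto. Qed.

Definition cc n k l := if andb (inIb D k) (inIb D l) then Cmult (Cmult (U n k) (Cconj (U n l))) (rho0 k l) else RtoC 0.
Definition w k l := - (E k - E l) / hbar.
Definition Gt n k l t := Cmult (cc n k l) (cexpi (w k l * t)).
Definition bnd n k l := if andb (inIb D k) (inIb D l) then Cmod (U n k) * Cmod (U n l) * Cmod (rho0 k l) else 0.

Lemma bnd_nonneg n k l : 0 <= bnd n k l.
Proof. unfold bnd. destruct (andb _ _). pose proof (Cmod_ge_0 (U n k)); pose proof (Cmod_ge_0 (U n l)); pose proof (Cmod_ge_0 (rho0 k l)).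
 apply Rmult_le_pos; auto. apply Rmult_le_pos; auto. lra. Qed.

Lemma bnd_amgm n k l : bnd n k l <= / 2 * (ud n k ^ 2 * rd l) + / 2 * (rd k * ud n l ^ 2).
Proof. unfold bnd. destruct (inIb D k) eqn:Hk; destruct (inIb D l) eqn:Hl; simpl.
 2-4: pose proof (rd_nonneg k); pose proof (rd_nonneg l); pose proof (ud_nonneg n k); pose proof (ud_nonneg n l); nra.
 pose proof (rho_bnd k l Hk Hl). unfold ud. rewrite Hk, Hl.
 pose proof (rd_nonneg k); pose proof (rd_nonneg l).
 set (x := Cmod (U n k)) in *. set (y := Cmod (U n l)) in *. set (z := Cmod (rho0 k l)) in *.
 assert (0 <= x) by apply Cmod_ge_0. assert (0 <= y) by apply Cmod_ge_0. assert (0 <= z) by apply Cmod_ge_0.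
 set (rk := rd k) in *. set (rl := rd l) in *.
 assert (HA : 0 <= x ^ 2 * rl + rk * y ^ 2) by nra.
 assert (HP : 0 <= 2 * (x * y * z)) by (apply Rmult_le_pos; [lra| apply Rmult_le_pos; [apply Rmult_le_pos|]; auto]).
 assert (Hsq : (2 * (x * y * z)) ^ 2 <= (x ^ 2 * rl + rk * y ^ 2) ^ 2).
 { assert (x^2 * y^2 * z^2 <= x^2 * y^2 * (rk * rl)) by (apply Rmult_le_compat_l; nra).
   assert (0 <= (x ^ 2 * rl - rk * y ^ 2) ^ 2) by apply pow2_ge_0.
   replace ((x ^ 2 * rl + rk * y ^ 2) ^ 2) with ((x ^ 2 * rl - rk * y ^ 2) ^ 2 + 4 * (x ^ 2 * y ^ 2 * (rk * rl))) by ring.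
   replace ((2 * (x * y * z)) ^ 2) with (4 * (x ^ 2 * y ^ 2 * z ^ 2)) by ring. lra. }
 assert (2 * (x * y * z) <= x ^ 2 * rl + rk * y ^ 2) by nra.
 lra. Qed.

Lemma bnd_sum n N : inI D n -> rs (fun k => rs (bnd n k) N) N <= 1.
Proof. intro Hn.
 eapply Rle_trans. apply (rs_le _ (fun k => rs (fun l => / 2 * (ud n k ^ 2 * rd l) + / 2 * (rd k * ud n l ^ 2)) N)).
 intros k _. apply rs_le. intros; apply bnd_amgm.
 rewrite (rs_ext _ (fun k => / 2 * rs (fun l => ud n k ^ 2 * rd l) N + / 2 * rs (fun l => rd k * ud n l ^ 2) N)).
 2: { intros k _. rewrite rs_plus, !rs_scal. reflexivity. }
 rewrite rs_plus, !rs_scal, !rs_prod.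
 pose proof (ud_sum n N Hn). pose proof (rd_sum N).
 assert (0 <= rs (fun k => ud n k ^ 2) N) by (apply rs_nonneg; intro; apply pow_le, ud_nonneg).
 assert (0 <= rs rd N) by (apply rs_nonneg, rd_nonneg).
 nra. Qed.

Lemma Gt_bnd n k l t : Cmod (Gt n k l t) <= bnd n k l.
Proof. unfold Gt, cc, bnd. rewrite Cmod_mult, Cmod_cexpi, Rmult_1_r.
 destruct (andb _ _). rewrite !Cmod_mult, Cmod_conj. lra. rewrite Cmod_0; lra. Qed.

Lemma rhop_eq n t : rhop D E hbar U rho0 n t = csum0 (fun k => csum0 (fun l => Gt n k l t)).
Proof. unfold rhop. rewrite csum_mask2. f_equal. apply functional_extensionality; intro k. f_equal.
 apply functional_extensionality; intro l. unfold Gt, cc. destruct (andb _ _).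
 - replace (- ((E k - E l) * t / hbar)) with (w k l * t) by (unfold w; field; lra).
   unfold cexpi. Ceq.
 - Ceq. Qed.

Lemma tav_Gt n k l : time_avg_is (Gt n k l) (if Nat.eqb k l then cc n k k else RtoC 0).
Proof. assert (H := tav_exp (cc n k l) (w k l)). unfold Gt.
 destruct (Nat.eqb_spec k l).
 - subst. destruct (Req_dec_T (w l l) 0); auto. exfalso; apply n0; unfold w; field; lra.
 - destruct (Req_dec_T (w k l) 0) as [Hw|Hw]; auto.
   unfold cc in *. destruct (inIb D k) eqn:Hk; destruct (inIb D l) eqn:Hl; simpl in *; auto.
   exfalso. apply n0. apply hA; auto. unfold w in Hw.
   assert (E k - E l = 0). { apply Rmult_eq_reg_r with (/ hbar). 2: apply Rinv_neq_0_compat; lra.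
     unfold Rdiv in Hw. lra. } lra.
Qed.

Definition FN n N t := cs (fun k => cs (fun l => Gt n k l t) N) N.
Definition aN n N := cs (fun k => cc n k k) N.

Lemma tav_FN n N : time_avg_is (FN n N) (aN n N).
Proof. unfold FN, aN.
 replace (cs (fun k => cc n k k) N) with (cs (fun k => cs (fun l => if Nat.eqb k l then cc n k k else RtoC 0) N) N).
 - apply (tav_cs (fun k t => cs (fun l => Gt n k l t) N)). intro k.
   apply (tav_cs (fun l t => Gt n k l t)). intro l. apply tav_Gt.
 - apply cs_ext. intros k Hk. rewrite (cs_ext _ (fun l => if Nat.eqb l k then cc n l l else RtoC 0)).
   rewrite cs_delta. rewrite (proj2 (Nat.ltb_lt k N) Hk). auto.
   intros l _. rewrite Nat.eqb_sym. destruct (Nat.eqb_spec l k); subst; auto.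
Qed.

Lemma cc_diag_bnd n k : inI D n -> Cmod (cc n k k) <= rd k.
Proof. intro Hn. unfold cc, rd, mask. destruct (inIb D k) eqn:Hk; simpl.
 - rewrite !Cmod_mult, Cmod_conj.
   assert (Cmod (rho0 k k) = Re (rho0 k k)).
   { unfold Cmod. rewrite (surjective_pairing (rho0 k k)). pose proof (rho_diag_im D rho0 hrho k Hk).
     pose proof (rho_diag_re D rho0 hrho k Hk). unfold Re, Im in *. simpl. rewrite H.
     replace (fst (rho0 k k) * (fst (rho0 k k) * 1) + 0 * (0 * 1)) with (fst (rho0 k k) ^ 2) by ring. apply sqrt_pow2; auto. }
   rewrite H. pose proof (ud_le1 n k Hn). unfold ud in H0. rewrite Hk in H0.
   pose proof (Cmod_ge_0 (U n k)). pose proof (rho_diag_re D rho0 hrho k Hk).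
   assert (Cmod (U n k) * Cmod (U n k) <= 1) by nra. nra.
 - right. unfold Cmod; simpl. replace (0*(0*1)+0*(0*1)) with 0 by ring. apply sqrt_0. Qed.

Lemma ex_rd : ex_series rd.
Proof. apply (ser_bound rd 1). apply rd_nonneg. apply rd_sum. Qed.

Lemma mu_eq n : mu D U rho0 n = csum0 (fun k => cc n k k).
Proof. unfold mu. rewrite csum_mask1. f_equal. apply functional_extensionality; intro k.
 unfold mask, cc. destruct (inIb D k); [|reflexivity]. rewrite Cmod2_alt. unfold Re, Im. Ceq. Qed.

Lemma mu_conv n : inI D n -> forall eps, 0 < eps -> exists N0, forall N, (N0 <= N)%nat ->
  Cmod (Cminus (mu D U rho0 n) (aN n N)) <= eps.
Proof. intros Hn. rewrite mu_eq. unfold aN. apply csum0_conv.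
 - apply (ex_series_le (V := R_CompleteNormedModule) _ rd); [|apply ex_rd].
   intro k. eapply Rle_trans; [apply re_le_Cmod|]. apply cc_diag_bnd; auto.
 - apply (ex_series_le (V := R_CompleteNormedModule) _ rd); [|apply ex_rd].
   intro k. eapply Rle_trans; [apply im_le_Cmod|]. apply cc_diag_bnd; auto. Qed.

Lemma FN_conv n : inI D n -> forall eps, 0 < eps -> exists N0, forall N, (N0 <= N)%nat ->
  forall t, Cmod (Cminus (rhop D E hbar U rho0 n t) (FN n N t)) <= eps.
Proof. intros Hn eps He.
 destruct (dblC (bnd n) 1 (bnd_nonneg n) (fun N => bnd_sum n N Hn) eps He) as [N0 HN0].
 exists N0. intros N HN t. rewrite rhop_eq. unfold FN.
 apply (HN0 (fun k l => Gt n k l t)); auto. intros; apply Gt_bnd. Qed.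

Lemma linear_part n : inI D n -> time_avg_is (rhop D E hbar U rho0 n) (mu D U rho0 n).
Proof. intro Hn. apply (approx_seq _ _ (FN n) (aN n)). apply tav_FN.
 intros eps He. destruct (FN_conv n Hn eps He) as [N1 H1]. destruct (mu_conv n Hn eps He) as [N2 H2].
 exists (max N1 N2). intros N HN. split. apply H1; lia. apply H2; lia. Qed.

Definition Q4 m n k l k' l' : C :=
  if Nat.eqb k l then (if Nat.eqb l' k' then Cmult (cc m k k) (cc n k' k') else RtoC 0)
  else (if Nat.eqb l' k then (if Nat.eqb l k' then Cmult (cc m k l) (cc n l k) else RtoC 0) else RtoC 0).

Lemma cc_zero n k l : inIb D k = false \/ inIb D l = false -> cc n k l = RtoC 0.
Proof. intros [H|H]; unfold cc; rewrite H; auto. destruct (inIb D k); auto. Qed.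

Lemma tav_P4 m n k l k' l' : time_avg_is (fun t => Cmult (Gt m k l t) (Gt n k' l' t)) (Q4 m n k l k' l').
Proof.
  assert (H := tav_exp (Cmult (cc m k l) (cc n k' l')) (w k l + w k' l')).
  eapply tav_ext in H.
  2: { intro t. unfold Gt. replace ((w k l + w k' l') * t) with (w k l * t + w k' l' * t) by ring.
       rewrite <- cexpi_add. instantiate (1 := fun t => Cmult (Cmult (cc m k l) (cexpi (w k l * t))) (Cmult (cc n k' l') (cexpi (w k' l' * t)))).
       Ceq. }
  simpl in H. replace (Q4 m n k l k' l') with (if Req_dec_T (w k l + w k' l') 0 then Cmult (cc m k l) (cc n k' l') else RtoC 0); [exact H|].
  assert (Hz : Cmult (cc m k l) (cc n k' l') = RtoC 0 \/
               (inI D k /\ inI D l /\ inI D k' /\ inI D l')).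
  { unfold inI. destruct (inIb D k) eqn:H1; destruct (inIb D l) eqn:H2; destruct (inIb D k') eqn:H3; destruct (inIb D l') eqn:H4;
    try (left; rewrite (cc_zero m k l) by auto; Ceq); try (left; rewrite (cc_zero n k' l') by auto; Ceq); right; auto. }
  unfold Q4. destruct (Nat.eqb_spec k l); destruct (Nat.eqb_spec l' k'); destruct (Nat.eqb_spec l' k);
    destruct (Nat.eqb_spec l k'); subst; try lia;
  destruct (Req_dec_T _ 0) as [Hw|Hw]; auto;
  try (destruct Hz as [Hz|Hz]; [rewrite Hz; auto|]); try (exfalso; apply Hw; unfold w; field; lra).
  all: exfalso; match goal with Hz : inI D ?a /\ inI D ?b /\ inI D ?c /\ inI D ?d, Hw : _ = 0 |- _ =>
    destruct Hz as [Ha [Hb [Hc Hd]]]; unfold w in Hw;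
    assert (HS : E a - E b + (E c - E d) = 0) by (apply Rmult_eq_reg_r with (/ hbar); [|apply Rinv_neq_0_compat; lra]; unfold Rdiv in Hw; lra);
    destruct (Nat.eq_dec a b) as [Hab|Hab];
    [ assert (c = d) by (apply hA; auto; subst; lra); lia
    | assert (HE : E a - E b <> 0) by (intro HE; apply Hab; apply hA; auto; lra);
      destruct (hB a b d c Ha Hb Hd Hc ltac:(lra) HE); lia ] end.
Qed.

Definition ZN m n N := cs (fun k => cs (fun l => if Nat.eqb k l then RtoC 0 else Cmult (cc m k l) (cc n l k)) N) N.

Lemma sum_Q4 m n N : cs (fun k => cs (fun k' => cs (fun l => cs (fun l' => Q4 m n k l k' l') N) N) N) N =
  Cplus (Cmult (aN m N) (aN n N)) (ZN m n N).
Proof.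
  unfold aN, ZN. rewrite <- cs_prod, <- cs_plus. apply cs_ext; intros k Hk. rewrite <- cs_plus.
  apply cs_ext; intros k' Hk'.
  rewrite (cs_ext _ (fun l => Cplus (if Nat.eqb l k then Cmult (cc m k k) (cc n k' k') else RtoC 0)
                                    (if Nat.eqb l k' then (if Nat.eqb k l then RtoC 0 else Cmult (cc m k l) (cc n l k)) else RtoC 0))).
  - rewrite cs_plus, !cs_delta. rewrite (proj2 (Nat.ltb_lt k N) Hk), (proj2 (Nat.ltb_lt k' N) Hk').
    reflexivity.
  - intros l Hl. unfold Q4. destruct (Nat.eqb_spec k l).
    + subst l.
      rewrite cs_delta, (proj2 (Nat.ltb_lt k' N) Hk'), Nat.eqb_refl.
      destruct (Nat.eqb_spec k k'); Ceq.
    + rewrite cs_delta, (proj2 (Nat.ltb_lt k N) Hk).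
      destruct (Nat.eqb_spec l k); [lia|]. destruct (Nat.eqb_spec l k'); Ceq.
Qed.

Lemma FN_prod m n N t : Cmult (FN m N t) (FN n N t) =
  cs (fun k => cs (fun k' => cs (fun l => cs (fun l' => Cmult (Gt m k l t) (Gt n k' l' t)) N) N) N) N.
Proof. unfold FN. rewrite <- cs_prod. apply cs_ext; intros k _. apply cs_ext; intros k' _.
 rewrite <- cs_prod. reflexivity. Qed.

Lemma tav_prodN m n N : time_avg_is (fun t => Cmult (FN m N t) (FN n N t)) (Cplus (Cmult (aN m N) (aN n N)) (ZN m n N)).
Proof. rewrite <- sum_Q4. apply tav_ext with (fun t => cs (fun k => cs (fun k' => cs (fun l => cs (fun l' => Cmult (Gt m k l t) (Gt n k' l' t)) N) N) N) N).
 intro; symmetry; apply FN_prod.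
 apply (tav_cs (fun k t => cs (fun k' => cs (fun l => cs (fun l' => Cmult (Gt m k l t) (Gt n k' l' t)) N) N) N)); intro k.
 apply (tav_cs (fun k' t => cs (fun l => cs (fun l' => Cmult (Gt m k l t) (Gt n k' l' t)) N) N)); intro k'.
 apply (tav_cs (fun l t => cs (fun l' => Cmult (Gt m k l t) (Gt n k' l' t)) N)); intro l.
 apply (tav_cs (fun l' t => Cmult (Gt m k l t) (Gt n k' l' t))); intro l'.
 apply tav_P4. Qed.

Definition Hnu m n k l : C := if andb (inIb D k) (inIb D l) then
   (if Nat.eqb k l then RtoC 0 else
    Cmult (Cmult (Cmult (Cmult (U m k) (Cconj (U m l))) (Cconj (U n k))) (U n l)) (RtoC (Cmod (rho0 k l) ^ 2)))
   else RtoC 0.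

Lemma nu_eq m n : nu D U rho0 m n = csum0 (fun k => csum0 (fun l => Hnu m n k l)).
Proof. unfold nu. rewrite csum_mask2. reflexivity. Qed.

Lemma ZN_eq m n N : ZN m n N = cs (fun k => cs (fun l => Hnu m n k l) N) N.
Proof. unfold ZN. apply cs_ext; intros k _. apply cs_ext; intros l _. unfold Hnu.
 destruct (Nat.eqb_spec k l).
 - destruct (andb _ _); auto.
 - unfold cc. destruct (inIb D k) eqn:Hk; destruct (inIb D l) eqn:Hl; cbv [andb]; try Ceq.
   destruct hrho as [Hh _]. rewrite (Hh k l Hk Hl). rewrite Cmod2_alt. unfold Re, Im. Ceq. Qed.

Lemma Hnu_bnd m n k l : inI D m -> inI D n -> Cmod (Hnu m n k l) <= rd k * rd l.
Proof. intros Hm Hn. pose proof (rd_nonneg k); pose proof (rd_nonneg l). unfold Hnu.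
 destruct (inIb D k) eqn:Hk; destruct (inIb D l) eqn:Hl; cbv [andb];
   try (rewrite Cmod_0; nra).
 destruct (Nat.eqb k l). rewrite Cmod_0; nra.
 rewrite !Cmod_mult, !Cmod_conj, Cmod_R, Rabs_pos_eq by (apply pow_le, Cmod_ge_0).
 pose proof (rho_bnd k l Hk Hl).
 pose proof (ud_le1 m k Hm); pose proof (ud_le1 m l Hm); pose proof (ud_le1 n k Hn); pose proof (ud_le1 n l Hn).
 unfold ud in *. rewrite Hk, Hl in *.
 pose proof (Cmod_ge_0 (U m k)); pose proof (Cmod_ge_0 (U m l)); pose proof (Cmod_ge_0 (U n k)); pose proof (Cmod_ge_0 (U n l)).
 set (x1 := Cmod (U m k)) in *; set (x2 := Cmod (U m l)) in *; set (x3 := Cmod (U n k)) in *; set (x4 := Cmod (U n l)) in *.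
 set (c := Cmod (rho0 k l) ^ 2) in *.
 assert (0 <= c) by (apply pow_le, Cmod_ge_0).
 assert (P1 : 0 <= x1 * x2 <= 1) by (split; nra).
 assert (P2 : 0 <= x1 * x2 * x3 <= 1) by (split; nra).
 assert (P3 : 0 <= x1 * x2 * x3 * x4 <= 1) by (split; nra).
 nra. Qed.

Lemma nu_conv m n : inI D m -> inI D n -> forall eps, 0 < eps -> exists N0, forall N, (N0 <= N)%nat ->
  Cmod (Cminus (nu D U rho0 m n) (ZN m n N)) <= eps.
Proof. intros Hm Hn eps He.
 destruct (dblC (fun k l => rd k * rd l) 1) with (eps := eps) as [N0 HN0]; auto.
 - intros; apply Rmult_le_pos; apply rd_nonneg.
 - intro N. rewrite rs_prod. pose proof (rd_sum N). pose proof (rs_nonneg rd N rd_nonneg). nra.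
 - exists N0. intros N HN. rewrite nu_eq, ZN_eq. apply HN0; auto. intros; apply Hnu_bnd; auto. Qed.

Lemma prod3 a b a' b' e : Cmod a' <= 1 -> Cmod b' <= 1 -> Cmod (Cminus a a') <= e -> Cmod (Cminus b b') <= e ->
  e <= 1 -> Cmod (Cminus (Cmult a b) (Cmult a' b')) <= 3 * e.
Proof. intros H1 H2 H3 H4 H5. eapply Rle_trans; [apply Cmod_prod_diff|].
 assert (Cmod a <= 2). { replace a with (Cplus (Cminus a a') a') by Ceq. eapply Rle_trans; [apply Cmod_triangle|]. lra. }
 pose proof (Cmod_ge_0 a); pose proof (Cmod_ge_0 (Cminus b b')); pose proof (Cmod_ge_0 b'); pose proof (Cmod_ge_0 (Cminus a a')).
 nra. Qed.

Lemma FN_bnd n N t : inI D n -> Cmod (FN n N t) <= 1.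
Proof. intro Hn. unfold FN. eapply Rle_trans. apply (cs_bound2 (fun k l => Gt n k l t) (bnd n)). intros; apply Gt_bnd.
 apply bnd_sum; auto. Qed.

Lemma aN_bnd n N : inI D n -> Cmod (aN n N) <= 1.
Proof. intro Hn. unfold aN. eapply Rle_trans. apply (Cmod_le_of N _ rd). intros; apply cc_diag_bnd; auto.
 apply rd_sum. Qed.

Lemma product_part m n : inI D m -> inI D n ->
  time_avg_is (fun tau => Cmult (rhop D E hbar U rho0 m tau) (rhop D E hbar U rho0 n tau))
              (Cplus (Cmult (mu D U rho0 m) (mu D U rho0 n)) (nu D U rho0 m n)).
Proof. intros Hm Hn.
 apply (approx_seq _ _ (fun N t => Cmult (FN m N t) (FN n N t)) (fun N => Cplus (Cmult (aN m N) (aN n N)) (ZN m n N))).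
 apply tav_prodN.
 intros eps He. set (e := Rmin 1 (eps / 4)).
 assert (He0 : 0 < e) by (apply Rmin_glb_lt; lra). assert (He1 : e <= 1) by apply Rmin_l. assert (He2 : e <= eps / 4) by apply Rmin_r.
 destruct (FN_conv m Hm e He0) as [N1 H1]. destruct (FN_conv n Hn e He0) as [N2 H2].
 destruct (mu_conv m Hm e He0) as [N3 H3]. destruct (mu_conv n Hn e He0) as [N4 H4].
 destruct (nu_conv m n Hm Hn e He0) as [N5 H5].
 exists (max N1 (max N2 (max N3 (max N4 N5)))). intros N HN. split.
 - intro t. assert (Cmod (Cminus (Cmult (rhop D E hbar U rho0 m t) (rhop D E hbar U rho0 n t)) (Cmult (FN m N t) (FN n N t))) <= 3 * e)
     by (apply prod3; [apply FN_bnd; auto | apply FN_bnd; auto | apply H1; lia | apply H2; lia | lra]). lra.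
 - replace (Cminus (Cplus (Cmult (mu D U rho0 m) (mu D U rho0 n)) (nu D U rho0 m n)) (Cplus (Cmult (aN m N) (aN n N)) (ZN m n N)))
     with (Cplus (Cminus (Cmult (mu D U rho0 m) (mu D U rho0 n)) (Cmult (aN m N) (aN n N))) (Cminus (nu D U rho0 m n) (ZN m n N))) by Ceq.
   eapply Rle_trans; [apply Cmod_triangle|].
   assert (Cmod (Cminus (Cmult (mu D U rho0 m) (mu D U rho0 n)) (Cmult (aN m N) (aN n N))) <= 3 * e).
   { apply prod3; [apply aN_bnd; auto | apply aN_bnd; auto | apply H3; lia | apply H4; lia | lra]. }
   specialize (H5 N ltac:(lia)). lra.
Qed.
End Main.

Theorem lemma1 (D : option nat) (E E' : nat -> R) (hbar : R)
  (U rho0 : nat -> nat -> C)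
  (hA : nondegenerate D E) (hA' : nondegenerate D E')
  (hB : nondegenerate_gaps D E) (hB' : nondegenerate_gaps D E')
  (hrho : density_mx D rho0) (hU : unitary_mx D U) (hhbar : 0 < hbar) :
  forall m n, inI D m -> inI D n ->
    time_avg_is (rhop D E hbar U rho0 n) (mu D U rho0 n) /\
    time_avg_is (fun tau => (rhop D E hbar U rho0 m tau * rhop D E hbar U rho0 n tau)%C)
                ((mu D U rho0 m * mu D U rho0 n + nu D U rho0 m n)%C).
Proof. intros m n Hm Hn. split.
 - apply (linear_part D E hbar U rho0 hA hrho hU hhbar n Hn).
 - apply (product_part D E hbar U rho0 hA hB hrho hU hhbar m n Hm Hn).
Qed.
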